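(* Let $\{a_n\}_{n=1}^\infty\subset(0,1]$ and define $P_n,Q_n:\{-1,1\}^n\to\mathbb{R}$ by $P_0\equiv Q_0\equiv 1$ and \[ P_{n+1}=P_n+\varepsilon_{n+1}a_{n+1}Q_n,\qquad Q_{n+1}=\varepsilon_{n+1}a_{n+1}P_n-Q_n,\qquad n=0,1,\dots \] Then for each $n=1,2,\dots$, \[ H(\hat P_n^2)=H(\hat Q_n^2)=-\sum_{i=1}^n\Big(\prod_{1\le j\le n,\ j\ne i}(1+a_j^2)\Big)a_i^2\log a_i^2. \]
   Context: Here $\varepsilon_i$ denotes the $i$-th coordinate function $\varepsilon_i(\delta_1,\dots,\delta_m)=\delta_i$ on $\{-1,1\}^m$ for $m\ge i$ (functions on $\{-1,1\}^n$ are regarded as functions on $\{-1,1\}^{n+1}$ not depending on the last coordinate). For $A\subseteq[n]$, $W_A=\prod_{i\in A}\varepsilon_i$ and, for $g:\{-1,1\}^n\to\mathbb{R}$, $\hat g(A)=2^{-n}\sum_{\delta\in\{-1,1\}^n}g(\delta)W_A(\delta)$. The (Fourier) entropy of $g$, defined also for non-normalized $g$, is $H(\hat g^2)=-\sum_{A\subseteq[n]}\hat g(A)^2\log\hat g(A)^2$ with $0\log 0=0$; logarithms are to base $2$. *)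

(* Defs.v *)
From HB Require Import structures.
From mathcomp Require Import all_boot all_order all_algebra.
From mathcomp Require Import reals exp.
Set Implicit Arguments. Unset Strict Implicit. Unset Printing Implicit Defensive.
Import Order.TTheory GRing.Theory Num.Theory.
Local Open Scope ring_scope.

Section Defs.
Variable R : realType.

Definition log2 (x : R) : R := ln x / ln 2.

Definition xlogx (x : R) : R := if x == 0 then 0 else x * log2 x.

(* A point of {-1,1}^m is encoded by a boolean vector; [sgn b] is the
   corresponding sign (false |-> 1, true |-> -1). *)
Definition sgn (b : bool) : R := if b then -1 else 1.

(* Infinite boolean sequences d : nat -> bool; coordinate k (0-based)
   gives epsilon_{k+1} = sgn (d k).  The pair (P_n, Q_n) as functions of d
   (they depend only on d 0, ..., d (n-1)). *)
Fixpoint PQ (a : nat -> R) (n : nat) (d : nat -> bool) : R * R :=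
  match n with
  | 0 => (1, 1)
  | m.+1 => let pq := PQ a m d in
            (pq.1 + sgn (d m) * a m.+1 * pq.2,
             sgn (d m) * a m.+1 * pq.1 - pq.2)
  end.

Definition ext (n : nat) (delta : {ffun 'I_n -> bool}) : nat -> bool :=
  fun k => if @insub nat (fun k => k < n)%N 'I_n k is Some i then delta i else false.

Definition Pfun (a : nat -> R) (n : nat) (delta : {ffun 'I_n -> bool}) : R :=
  (PQ a n (ext delta)).1.
Definition Qfun (a : nat -> R) (n : nat) (delta : {ffun 'I_n -> bool}) : R :=
  (PQ a n (ext delta)).2.

Definition walsh (n : nat) (A : {set 'I_n}) (delta : {ffun 'I_n -> bool}) : R :=
  \prod_(i in A) sgn (delta i).

Definition fourier (n : nat) (g : {ffun 'I_n -> bool} -> R) (A : {set 'I_n}) : R :=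
  ((2 : R) ^+ n)^-1 * \sum_(delta : {ffun 'I_n -> bool}) g delta * walsh A delta.

Definition fentropy (n : nat) (g : {ffun 'I_n -> bool} -> R) : R :=
  - \sum_(A : {set 'I_n}) xlogx (fourier g A ^+ 2).

End Defs.

(* Main.v *)
Require Import Defs.
From HB Require Import structures.
From mathcomp Require Import all_boot all_order all_algebra.
From mathcomp Require Import reals exp ring.
Import Order.TTheory GRing.Theory Num.Theory.
Local Open Scope ring_scope.

Section Aux.
Variables (R : realType) (a : nat -> R) (n : nat).

Definition inB (B : {set 'I_n}) (k : nat) : bool := [exists i in B, val i == k].

Fixpoint cPQ (m : nat) (B : {set 'I_n}) : R * R :=
  match m with
  | 0 => (1, 1)
  | m'.+1 => let c := cPQ m' B in
     if inB B m' then (a m'.+1 * c.2, a m'.+1 * c.1) else (c.1, - c.2)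
  end.

Definition W (B : {set 'I_n}) (d : nat -> bool) : R :=
  \prod_(i in B) sgn R (d (val i)).

Definition lowB (m : nat) (B : {set 'I_n}) : bool := [forall i in B, val i < m]%N.

Lemma inB_val (B : {set 'I_n}) (i : 'I_n) : inB B (val i) = (i \in B).
Proof.
apply/existsP/idP => [[j /andP[jB /eqP /val_inj ji]]|iB].
  by rewrite -ji.
by exists i; rewrite iB eqxx.
Qed.

Lemma inB_U1 (B : {set 'I_n}) (i : 'I_n) k : inB (i |: B) k = (val i == k) || inB B k.
Proof.
apply/existsP/orP => [[j /andP[]]|].
  rewrite in_setU1 => /orP[/eqP -> ->|jB jk]; first by left.
  by right; apply/existsP; exists j; rewrite jB.
case=> [ik|/existsP[j /andP[jB jk]]].
  by exists i; rewrite setU11.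
by exists j; rewrite in_setU1 jB orbT.
Qed.

Lemma cPQ_local m (B B' : {set 'I_n}) :
  (forall k, (k < m)%N -> inB B k = inB B' k) -> cPQ m B = cPQ m B'.
Proof.
elim: m => [//|m IH] H /=.
have -> : cPQ m B = cPQ m B' by apply: IH => k km; apply: H; rewrite ltnS ltnW.
by rewrite (H m).
Qed.

Lemma W_U1 (B : {set 'I_n}) (i : 'I_n) (d : nat -> bool) : i \notin B -> W (i |: B) d = sgn R (d (val i)) * W B d.
Proof. by move=> iB; rewrite /W big_setU1. Qed.

Lemma lowB_U1 k (B : {set 'I_n}) (i : 'I_n) : lowB k (i |: B) = (val i < k)%N && lowB k B.
Proof.
apply/forallP/andP => [H|[ik /forallP H] j].
  split; first by have /implyP := H i; apply; rewrite setU11.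
  by apply/forallP => j; apply/implyP => jB; have /implyP := H j; apply; rewrite in_setU1 jB orbT.
by rewrite in_setU1; case: eqP => [->|_] /=; [rewrite ik | exact: H].
Qed.

Lemma expand m : (m <= n)%N -> forall d,
  PQ a m d = (\sum_(B | lowB m B) (cPQ m B).1 * W B d,
              \sum_(B | lowB m B) (cPQ m B).2 * W B d).
Proof.
elim: m => [_ d|m IH mn d].
  have e : lowB 0 =1 pred1 set0.
    move=> B /=; apply/forallP/eqP => [H|-> i]; last by rewrite in_set0.
    apply/setP => i; rewrite in_set0; apply/negbTE.
    by have := H i; rewrite ltn0 implybF.
  by rewrite !(big_pred1 set0 e) /W big_set0 /= mulr1.
set i0 := Ordinal mn.
have nB : forall B, lowB m B -> i0 \notin B.
  by move=> B /forallP H; apply/negP => iB; have := implyP (H i0) iB; rewrite ltnn.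
have lowS : forall B, lowB m.+1 B && (i0 \notin B) = lowB m B.
  move=> B; apply/andP/idP => [[/forallP H nB0]|H].
    apply/forallP => i; apply/implyP => iB; have := implyP (H i) iB.
    rewrite ltnS leq_eqVlt => /orP[/eqP e|//].
    have ei : i = i0 by apply: val_inj.
    by move: nB0; rewrite -ei iB.
  split; last exact: nB.
  move/forallP: H => H; apply/forallP => i; apply/implyP => iB.
  by have := implyP (H i) iB => /ltnW; rewrite ltnS.
have splitS : forall F : {set 'I_n} -> R,
    \sum_(B | lowB m.+1 B) F B = \sum_(B | lowB m B) F B + \sum_(B | lowB m B) F (i0 |: B).
  move=> F; rewrite (bigID (fun B : {set 'I_n} => i0 \in B)) /= addrC; congr (_ + _).
    by apply: eq_bigl => B; rewrite lowS.
  rewrite (reindex_onto (fun B : {set 'I_n} => i0 |: B) (fun B : {set 'I_n} => B :\ i0)) /=; last first.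
    by move=> B /andP[_ iB]; rewrite setD1K.
  apply: eq_bigl => B; rewrite setU11 andbT lowB_U1 /= ltnSn /= -lowS.
  congr (_ && _); apply/eqP/idP => [<-|nB0]; first by rewrite setD11.
  by rewrite setU1K.
have c1 : forall B, lowB m B -> cPQ m.+1 B = ((cPQ m B).1, - (cPQ m B).2).
  move=> B /nB nB0 /=; have e : inB B m = (i0 \in B) := inB_val B i0.
  by rewrite e (negbTE nB0).
have c2 : forall B, lowB m B ->
    cPQ m.+1 (i0 |: B) = (a m.+1 * (cPQ m B).2, a m.+1 * (cPQ m B).1).
  move=> B _ /=; rewrite (@cPQ_local m (i0 |: B) B); last first.
    by move=> k km; rewrite inB_U1 /= (gtn_eqF km).
  have e : inB (i0 |: B) m = (i0 \in i0 |: B) := inB_val _ i0.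
  by rewrite e setU11.
rewrite [LHS]/= (IH (ltnW mn) d) [LHS]/= !splitS; congr (_, _).
  rewrite [X in _ = X + _](eq_bigr (fun B => (cPQ m B).1 * W B d)); last by move=> B /c1 ->.
  rewrite [X in _ = _ + X](eq_bigr (fun B => sgn R (d m) * a m.+1 * ((cPQ m B).2 * W B d))).
    by rewrite -big_distrr.
  by move=> B hB; rewrite c2 // W_U1 ?nB //=; ring.
rewrite [X in _ = X + _](eq_bigr (fun B => - ((cPQ m B).2 * W B d))); last first.
  by move=> B /c1 -> /=; rewrite mulNr.
rewrite [X in _ = _ + X](eq_bigr (fun B => sgn R (d m) * a m.+1 * ((cPQ m B).1 * W B d))).
  by rewrite -big_distrr sumrN addrC.
by move=> B hB; rewrite c2 // W_U1 ?nB //=; ring.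
Qed.

Lemma cPQ_sq m (B : {set 'I_n}) :
  ((cPQ m B).1 ^+ 2 = \prod_(i in B | (val i < m)%N) a (val i).+1 ^+ 2) /\
  ((cPQ m B).2 ^+ 2 = \prod_(i in B | (val i < m)%N) a (val i).+1 ^+ 2).
Proof.
elim: m => [|m [IH1 IH2]] /=.
  by rewrite big_pred0 ?expr1n // => i; rewrite ltn0 andbF.
have -> : \prod_(i in B | (val i < m.+1)%N) a (val i).+1 ^+ 2 =
   (if inB B m then a m.+1 ^+ 2 else 1) * \prod_(i in B | (val i < m)%N) a (val i).+1 ^+ 2.
  case: (boolP (inB B m)) => [/existsP [i0 /andP [iB /eqP im]] | nm].
    rewrite (bigD1 i0) /=; last by rewrite iB im ltnSn.
    rewrite im; congr (_ * _); apply: eq_bigl => j.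
    case: (eqVneq j i0) => [->|nj]; first by rewrite ?eqxx ?andbF ?im ?ltnn ?andbF.
    by rewrite andbT ltnS leq_eqVlt -im val_eqE (negbTE nj).
  rewrite mul1r; apply: eq_bigl => j; rewrite ltnS leq_eqVlt.
  case jB: (j \in B) => //=; case: eqP => //= jm; case/negP: nm.
  by apply/existsP; exists j; rewrite jB /= jm.
by case: (inB B m) => /=; rewrite ?mul1r ?sqrrN ?exprMn ?IH1 ?IH2.
Qed.

Lemma walsh_mx (A : {set 'I_n}) d :
  walsh R A d = \prod_i (if i \in A then sgn R (d i) else 1).
Proof. by rewrite /walsh big_mkcond. Qed.

Lemma orth (A B : {set 'I_n}) :
  \sum_(d : {ffun 'I_n -> bool}) walsh R B d * walsh R A d = if B == A then 2 ^+ n else 0.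
Proof.
transitivity (\prod_(i : 'I_n) \sum_(b : bool)
   ((if i \in B then sgn R b else 1) * (if i \in A then sgn R b else 1))).
  by rewrite bigA_distr_bigA; apply: eq_bigr => d _; rewrite !walsh_mx -big_split.
case: eqP => [->|/eqP nBA].
  rewrite (eq_bigr (fun _ => 2)); first by rewrite prodr_const card_ord.
  by move=> i _; rewrite big_bool /=; case: (i \in A); rewrite /sgn /=; ring.
have [i Hi] : exists i, (i \in B) != (i \in A).
  apply/existsP; apply: contraR nBA => /existsPn H; apply/eqP/setP => i.
  by have := H i; rewrite negbK => /eqP.
rewrite (bigD1 i) //= big_bool /=; move: Hi.
by case: (i \in B); case: (i \in A) => //= _; rewrite /sgn /=; ring.
Qed.

Lemma fourier_expand (g : {ffun 'I_n -> bool} -> R) (c : {set 'I_n} -> R) :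
  (forall d, g d = \sum_B c B * walsh R B d) -> forall A, fourier g A = c A.
Proof.
move=> Hg A; rewrite /fourier.
rewrite (eq_bigr (fun d => \sum_B c B * (walsh R B d * walsh R A d))); last first.
  by move=> d _; rewrite Hg big_distrl /=; apply: eq_bigr => B _; rewrite mulrA.
rewrite exchange_big /=.
rewrite (eq_bigr (fun B => c B * (if B == A then 2 ^+ n else 0))); last first.
  by move=> B _; rewrite -big_distrr /= orth.
rewrite (bigD1 A) //= eqxx big1 ?addr0; last by move=> B /negbTE ->; rewrite mulr0.
have h2 : (2:R) ^+ n != 0 by rewrite expf_neq0 // pnatr_eq0.
by rewrite mulrCA mulVf ?mulr1.
Qed.

Lemma ext_val (d : {ffun 'I_n -> bool}) (i : 'I_n) : ext d (val i) = d i.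
Proof. by rewrite /ext valK. Qed.

Lemma PQ_expand d :
  PQ a n (ext d) = (\sum_B (cPQ n B).1 * walsh R B d, \sum_B (cPQ n B).2 * walsh R B d).
Proof.
rewrite (@expand n (leqnn n)); congr (_, _); apply: eq_big => B //.
all: try (by apply/forallP => i; apply/implyP => _; exact: ltn_ord).
all: by move=> _; congr (_ * _); apply: eq_bigr => i _; rewrite ext_val.
Qed.

Lemma fourierP A : fourier (@Pfun R a n) A = (cPQ n A).1.
Proof. by apply: (@fourier_expand _ (fun B => (cPQ n B).1)) => d; rewrite /Pfun PQ_expand. Qed.

Lemma fourierQ A : fourier (@Qfun R a n) A = (cPQ n A).2.
Proof. by apply: (@fourier_expand _ (fun B => (cPQ n B).2)) => d; rewrite /Qfun PQ_expand. Qed.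

Lemma cPQ_sq' (B : {set 'I_n}) :
  ((cPQ n B).1 ^+ 2 = \prod_(i in B) a (val i).+1 ^+ 2) /\
  ((cPQ n B).2 ^+ 2 = \prod_(i in B) a (val i).+1 ^+ 2).
Proof.
have e : \prod_(i in B | (val i < n)%N) a (val i).+1 ^+ 2 = \prod_(i in B) a (val i).+1 ^+ 2.
  by apply: eq_bigl => i; rewrite ltn_ord andbT.
by rewrite -e; apply: cPQ_sq.
Qed.

End Aux.
Lemma entropy_formula (R : realType) n (x : 'I_n -> R) (hx : forall i, 0 < x i) :
 \sum_(A : {set 'I_n}) xlogx (\prod_(i in A) x i) =
 \sum_(i : 'I_n) (\prod_(j | j != i) (1 + x j)) * (x i * log2 (x i)).
Proof.
have hp : forall A : {set 'I_n}, 0 < \prod_(i in A) x i /\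
    log2 (\prod_(i in A) x i) = \sum_(i in A) log2 (x i).
  move=> A; apply: (big_ind2 (fun u v => 0 < u /\ log2 u = v)).
  - by rewrite /log2 ln1 mul0r.
  - move=> u1 v1 u2 v2 [hu1 <-] [hu2 <-]; split; first exact: mulr_gt0.
    by rewrite /log2 lnM ?mulrDl // posrE.
  - by move=> i _; split.
rewrite (eq_bigr (fun A : {set 'I_n} => \sum_(i : 'I_n)
   (if i \in A then \prod_(j in A) x j * log2 (x i) else 0))); last first.
  move=> A _; have [hA hl] := hp A; rewrite /xlogx (gt_eqF hA) hl big_distrr /= big_mkcond /=.
  by apply: eq_bigr => i _; case: (i \in A); rewrite ?mulr0.
rewrite exchange_big /=; apply: eq_bigr => i _.
rewrite -big_mkcond /= -big_distrl /=.
have key : \sum_(A : {set 'I_n} | i \in A) \prod_(j in A) x j =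
           x i * \prod_(j | j != i) (1 + x j).
  have := @bigA_distr R 0 1 *%R +%R 'I_n (fun j => x j) (fun j => if j == i then 0 else 1).
  rewrite (bigD1 i) //= eqxx addr0.
  rewrite (eq_bigr (fun j => 1 + x j)); last by move=> j /negbTE ->; rewrite addrC.
  move=> ->; rewrite big_mkcond; apply: eq_big => // J _.
  case: (boolP (i \in J)) => iJ.
    rewrite big_mkcond; apply: eq_bigr => j _; case: ifP => // jJ.
    by case: eqP => // ji; move: jJ; rewrite ji iJ.
  by rewrite (bigD1 i) //= (negbTE iJ) eqxx mul0r.
by rewrite key; ring.
Qed.
Lemma shift_sum (R : realType) (a : nat -> R) n :
  \sum_(1 <= i < n.+1)
        (\prod_(1 <= j < n.+1 | j != i) (1 + a j ^+ 2)) * (a i ^+ 2 * log2 (a i ^+ 2))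
  = \sum_(i : 'I_n) (\prod_(j | j != i) (1 + a (val j).+1 ^+ 2)) *
        (a (val i).+1 ^+ 2 * log2 (a (val i).+1 ^+ 2)).
Proof.
rewrite big_add1 /= big_mkord; apply: eq_bigr => i _; congr (_ * _).
rewrite big_add1 /= big_mkord; apply: eq_bigl => j.
by rewrite eqSS val_eqE.
Qed.

Theorem proposition3 (R : realType) (a : nat -> R)
  (ha : forall k : nat, (1 <= k)%N -> 0 < a k <= 1)
  (n : nat) (hn : (1 <= n)%N) :
  fentropy (@Pfun R a n) =
    - \sum_(1 <= i < n.+1)
        (\prod_(1 <= j < n.+1 | j != i) (1 + a j ^+ 2)) * (a i ^+ 2 * log2 (a i ^+ 2))
  /\
  fentropy (@Qfun R a n) =
    - \sum_(1 <= i < n.+1)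
        (\prod_(1 <= j < n.+1 | j != i) (1 + a j ^+ 2)) * (a i ^+ 2 * log2 (a i ^+ 2)).
Proof.
have hx : forall i : 'I_n, 0 < a (val i).+1 ^+ 2.
  by move=> i; have /andP[h _] := ha (val i).+1 isT; rewrite exprn_gt0.
rewrite shift_sum -(@entropy_formula R n _ hx) /fentropy; split; congr (- _); apply: eq_bigr => A _.
  by rewrite fourierP (@cPQ_sq' R a n A).1.
by rewrite fourierQ (@cPQ_sq' R a n A).2.
Qed.
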